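(* Fix $\mu>0$, $\rho>0$ and $s\in\mathbb{R}^m$. For $a,b\in\mathbb{R}$ let $w(a,b;\mu,\rho)=\frac{1}{2\rho}\big(\sqrt{(b-\rho a)^2+4\rho\mu}-(b-\rho a)\big)$. Consider the logarithmic-barrier subproblem $$(\mathrm{LB})\quad \min_{x\in\mathbb{R}^n,\ z\in\mathbb{R}^m_{++}}\ f(x)-\mu\sum_{i=1}^m\ln z_i\quad\text{s.t.}\quad c(x)-z=0,$$ and the modified problem $$(\mathrm{MB}_s)\quad \min_{x\in\mathbb{R}^n}\ f(x)-\mu\sum_{i=1}^m\ln w(c_i(x),s_i;\mu,\rho)\quad\text{s.t.}\quad c_i(x)-w(c_i(x),s_i;\mu,\rho)=0,\ i=1,\dots,m.$$ (1) If $(x^*,z^* )$ is a local solution of (LB) and $c_i(x^* )=w(c_i(x^* ),s_i;\mu,\rho)$ for $i=1,\dots,m$, then $x^*$ is a local solution of $(\mathrm{MB}_s)$. (2) Suppose $((x^*,z^* ),s^* )$ is a KKT pair of (LB), i.e. $c(x^* )=z^*>0$, $\nabla f(x^* )-\nabla c(x^* )s^*=0$ and $s_i^*=\mu/z_i^*$ for all $i$. Then $c_i(x^* )=w(c_i(x^* ),s_i^*;\mu,\rho)$ for all $i$, and $x^*$ is a KKT point of $(\mathrm{MB}_{s^*})$ with Lagrange multiplier $s_i^*$ associated with the constraint $c_i(x)-w(c_i(x),s_i^*;\mu,\rho)=0$; that is, $\nabla_x L(x^*,s^*,s^* )=0$, where $$L(x,s,\lambda)=f(x)-\mu\sum_{i=1}^m\ln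 w(c_i(x),s_i;\mu,\rho)-\sum_{i=1}^m\lambda_i\big(c_i(x)-w(c_i(x),s_i;\mu,\rho)\big).$$
   Context: $f:\mathbb{R}^n\to\mathbb{R}$ and $c=(c_1,\dots,c_m):\mathbb{R}^n\to\mathbb{R}^m$ are twice continuously differentiable; $\nabla c(x)\in\mathbb{R}^{n\times m}$ denotes the matrix whose $i$-th column is $\nabla c_i(x)$. $\mathbb{R}^m_{++}$ denotes vectors with all components positive. Note $w(a,b;\mu,\rho)>0$ for all $a,b$. *)

(* Defs.v *)
From HB Require Import structures.
From mathcomp Require Import all_boot all_order all_algebra.
From mathcomp Require Import all_classical all_reals all_analysis.
Set Implicit Arguments. Unset Strict Implicit. Unset Printing Implicit Defensive.
Import Order.TTheory GRing.Theory Num.Theory.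
Import numFieldNormedType.Exports.
Local Open Scope ring_scope.

Section Defs.
Variable R : realType.

Definition ebasis (n : nat) (j : 'I_n) : 'cV[R]_n := delta_mx j 0.

Definition ccomp (n m : nat) (c : 'cV[R]_n -> 'cV[R]_m) (i : 'I_m) : 'cV[R]_n -> R :=
  fun x => c x i 0.

Definition partial (n : nat) (j : 'I_n) (g : 'cV[R]_n -> R) : 'cV[R]_n -> R :=
  fun x => derive g x (ebasis j).

Definition C2 (n : nat) (g : 'cV[R]_n -> R) : Prop :=
  continuous g /\
  (forall j x, derivable g x (ebasis j)) /\
  (forall j, continuous (partial j g)) /\
  (forall j k x, derivable (partial j g) x (ebasis k)) /\
  (forall j k, continuous (partial k (partial j g))).

Definition grad (n : nat) (g : 'cV[R]_n -> R) (x : 'cV[R]_n) : 'cV[R]_n :=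
  \col_j partial j g x.

Definition gradc (n m : nat) (c : 'cV[R]_n -> 'cV[R]_m) (x : 'cV[R]_n) : 'M[R]_(n, m) :=
  \matrix_(j, i) partial j (ccomp c i) x.

Definition w (a b mu rho : R) : R :=
  (Num.sqrt ((b - rho * a) ^+ 2 + 4 * rho * mu) - (b - rho * a)) / (2 * rho).

Definition LB_obj (n m : nat) (f : 'cV[R]_n -> R) (mu : R) (x : 'cV[R]_n) (z : 'cV[R]_m) : R :=
  f x - mu * \sum_(i < m) ln (z i 0).

Definition LB_feasible (n m : nat) (c : 'cV[R]_n -> 'cV[R]_m) (x : 'cV[R]_n) (z : 'cV[R]_m) : Prop :=
  (forall i, 0 < z i 0) /\ c x - z = 0.

Definition LB_local_sol (n m : nat) (f : 'cV[R]_n -> R) (c : 'cV[R]_n -> 'cV[R]_m) (mu : R)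
    (xs : 'cV[R]_n) (zs : 'cV[R]_m) : Prop :=
  LB_feasible c xs zs /\
  exists eps : R, 0 < eps /\
    forall x z, `|x - xs| < eps -> `|z - zs| < eps -> LB_feasible c x z ->
      LB_obj f mu xs zs <= LB_obj f mu x z.

Definition MB_obj (n m : nat) (f : 'cV[R]_n -> R) (c : 'cV[R]_n -> 'cV[R]_m) (mu rho : R)
    (s : 'cV[R]_m) (x : 'cV[R]_n) : R :=
  f x - mu * \sum_(i < m) ln (w (ccomp c i x) (s i 0) mu rho).

Definition MB_feasible (n m : nat) (c : 'cV[R]_n -> 'cV[R]_m) (mu rho : R) (s : 'cV[R]_m)
    (x : 'cV[R]_n) : Prop :=
  forall i, ccomp c i x - w (ccomp c i x) (s i 0) mu rho = 0.

Definition MB_local_sol (n m : nat) (f : 'cV[R]_n -> R) (c : 'cV[R]_n -> 'cV[R]_m) (mu rho : R)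
    (s : 'cV[R]_m) (xs : 'cV[R]_n) : Prop :=
  MB_feasible c mu rho s xs /\
  exists eps : R, 0 < eps /\
    forall x, `|x - xs| < eps -> MB_feasible c mu rho s x ->
      MB_obj f c mu rho s xs <= MB_obj f c mu rho s x.

Definition MB_L (n m : nat) (f : 'cV[R]_n -> R) (c : 'cV[R]_n -> 'cV[R]_m) (mu rho : R)
    (x : 'cV[R]_n) (s lam : 'cV[R]_m) : R :=
  f x - mu * \sum_(i < m) ln (w (ccomp c i x) (s i 0) mu rho)
      - \sum_(i < m) lam i 0 * (ccomp c i x - w (ccomp c i x) (s i 0) mu rho).

Definition LB_KKT (n m : nat) (f : 'cV[R]_n -> R) (c : 'cV[R]_n -> 'cV[R]_m) (mu : R)
    (xs : 'cV[R]_n) (zs ss : 'cV[R]_m) : Prop :=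
  c xs = zs /\ (forall i, 0 < zs i 0) /\
  grad f xs - gradc c xs *m ss = 0 /\
  (forall i, ss i 0 = mu / zs i 0).

End Defs.

(* Main.v *)
Require Import Defs.
From HB Require Import structures.
From mathcomp Require Import all_boot all_order all_algebra.
From mathcomp Require Import all_classical all_reals all_analysis.
From mathcomp Require Import ring lra.
Import Order.TTheory GRing.Theory Num.Theory.
Import numFieldNormedType.Exports.
Local Open Scope ring_scope.

Lemma mxnorm_lt (R : realType) n m (M : 'M[R]_(n,m)) e : 0 < e ->
  (forall i j, `|M i j| < e) -> `|M| < e.
Proof.
move=> e0 H.
have : ball (0 : 'M[R]_(n,m)) e M.
  split => // i j. rewrite mxE /ball /=.
  have -> : `|0 - M i j| = `|M i j| :> R by rewrite add0r normrN.
  exact: H.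
rewrite mx_norm_ball /ball_ /=.
have -> : `|0 - M| = `|M| by rewrite add0r normrN.
by [].
Qed.

Section Chain.
Variable R : realType.

Lemma deriveP1 (V : normedModType R) (f : V -> R) x v :
  'D_v f x = 'D_1 (fun h : R => f (h *: v + x)) 0.
Proof.
rewrite /derive; set g1 := fun h => h^-1 *: _; set g2 := fun h => h^-1 *: _.
suff -> : g1 = g2 by [].
by rewrite funeqE /g1 /g2 => h /=; rewrite addr0 scale0r add0r [_%:A]mulr1.
Qed.

Lemma chain (V : normedModType R) (f : V -> R) (h : R -> R) x v :
  derivable f x v -> derivable h (f x) 1 ->
  derivable (h \o f) x v /\ 'D_v (h \o f) x = 'D_1 h (f x) * 'D_v f x.
Proof.
move=> df dh; set F := fun t : R => f (t *: v + x).
have dF : derivable F 0 1 by move: df => /derivable1P.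
have F0 : F 0 = f x by rewrite /F scale0r add0r.
have dh' : derivable h (F 0) 1 by rewrite F0.
split.
  apply/derivable1P; change (derivable (h \o F) 0 1).
  apply/derivable1_diffP; apply: differentiable_comp; exact/derivable1_diffP.
rewrite (@deriveP1 V (h \o f) x v) (@deriveP1 V f x v) -/F.
change ('D_1 (h \o F) 0 = 'D_1 h (f x) * 'D_1 F 0).
by rewrite -!derive1E (derive1_comp dF dh') F0.
Qed.
End Chain.

Section W.
Variable R : realType.

Lemma dw (mu rho b a : R) : 0 < mu -> 0 < rho ->
  derivable (fun a => w a b mu rho) a 1.
Proof.
move=> hmu hrho.
pose L : R -> R := cst b - (fun a => rho * a).
pose q : R -> R := L ^+ 2 + cst (4 * rho * mu).
have dL : forall a, derivable L a 1.
  move=> a'; apply: derivableB; first exact: derivable_cst.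
  have -> : (fun a => rho * a) = cst rho * id by apply/funext.
  apply: derivableM; [exact: derivable_cst | exact: derivable_id].
have dq : derivable q a 1.
  apply: derivableD; last exact: derivable_cst.
  exact: derivableX.
have qpos : 0 < q a.
  rewrite /q /= ltr_wpDl ?sqr_ge0 //.
  by rewrite !mulr_gt0.
have -> : (fun a => w a b mu rho) = ((Num.sqrt \o q) - L) * cst (2 * rho)^-1.
  by apply/funext => a'; rewrite /w /q /L /=.
apply: derivableM; last exact: derivable_cst.
have hs : derivable Num.sqrt (q a) 1 by apply: ex_derive; exact: is_derive1_sqrt.
apply: derivableB; last exact: dL.
by have [] := @chain R _ q Num.sqrt a 1 dq hs.
Qed.
End W.

Section W2.
Variable R : realType.

Lemma wfix (mu rho z : R) : 0 < mu -> 0 < rho -> 0 < z -> w z (mu / z) mu rho = z.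
Proof.
move=> hmu hrho hz; rewrite /w.
set s := mu / z.
have hs : 0 < s by rewrite divr_gt0.
have hmus : mu = s * z by rewrite /s mulfVK // gt_eqF.
have -> : (s - rho * z) ^+ 2 + 4 * rho * mu = (s + rho * z) ^+ 2.
  by rewrite hmus; ring.
rewrite sqrtr_sqr ger0_norm; last by rewrite addr_ge0 // ?ltW // mulr_gt0.
have h2 : 2 * rho != 0 by rewrite mulf_neq0 // gt_eqF.
by apply/(mulIf h2); rewrite mulfVK //; ring.
Qed.

Lemma dg (mu rho z : R) : 0 < mu -> 0 < rho -> 0 < z ->
  let g := fun a => mu * ln (w a (mu / z) mu rho) + mu / z * (a - w a (mu / z) mu rho) in
  derivable g z 1 /\ 'D_1 g z = mu / z.
Proof.
move=> hmu hrho hz g.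
set s := mu / z.
pose wb := fun a => w a s mu rho.
have dwb : forall a, derivable wb a 1 by move=> a; exact: dw.
have wz : wb z = z by exact: wfix.
have dln : derivable (@ln R) (wb z) 1 by rewrite wz; apply: ex_derive; exact: is_derive1_ln.
have [dlw Dlw] := @chain R _ wb (@ln R) z 1 (dwb z) dln.
have -> : g = (cst mu * (@ln R \o wb)) + (cst s * (id - wb)) by apply/funext.
have did : derivable (@id R) z 1 by exact: derivable_id.
have didw : derivable (id - wb) z 1 by apply: derivableB; [exact: derivable_id | exact: dwb].
have d1 : derivable (cst mu * (@ln R \o wb)) z 1.
  by apply: derivableM; [exact: derivable_cst | exact: dlw].
have d2 : derivable (cst s * (id - wb)) z 1.
  by apply: derivableM; [exact: derivable_cst | exact: didw].
split; first exact: derivableD.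
rewrite (deriveD d1 d2) (deriveM (derivable_cst _ _ _) dlw) (deriveM (derivable_cst _ _ _) didw).
rewrite !derive_cst Dlw (deriveB did (dwb z)).
rewrite derive_id wz.
have -> : 'D_1 (@ln R) z = z^-1 by have [_ ->] := is_derive1_ln hz.
rewrite /= !scaler0 !addr0 /s.
have sc : forall a b : R, a *: b = a * b by [].
rewrite !sc; ring.
Qed.
End W2.

Lemma wpos (R : realType) (a b mu rho : R) : 0 < mu -> 0 < rho -> 0 < w a b mu rho.
Proof.
move=> hmu hrho; rewrite /w divr_gt0 ?mulr_gt0 // subr_gt0.
set t := b - rho * a.
apply: (le_lt_trans (ler_norm t)).
rewrite -sqrtr_sqr ltr_sqrt; last by rewrite ltr_wpDl ?sqr_ge0 // !mulr_gt0.
by rewrite ltrDl !mulr_gt0.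
Qed.

Theorem lemma2p1 (R : realType) (n m : nat)
  (f : 'cV[R]_n -> R) (c : 'cV[R]_n -> 'cV[R]_m)
  (hf : C2 f) (hc : forall i : 'I_m, C2 (ccomp c i))
  (mu rho : R) (hmu : 0 < mu) (hrho : 0 < rho) :
  (forall (s : 'cV[R]_m) (xs : 'cV[R]_n) (zs : 'cV[R]_m),
      LB_local_sol f c mu xs zs ->
      (forall i : 'I_m, ccomp c i xs = w (ccomp c i xs) (s i 0) mu rho) ->
      MB_local_sol f c mu rho s xs) /\
  (forall (xs : 'cV[R]_n) (zs ss : 'cV[R]_m),
      LB_KKT f c mu xs zs ss ->
      (forall i : 'I_m, ccomp c i xs = w (ccomp c i xs) (ss i 0) mu rho) /\
      grad (fun x => MB_L f c mu rho x ss ss) xs = 0).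
Proof.
split.
  move=> s xs zs [[zpos czs] [eps [e0 Hloc]]] Hw.
  have czs' : c xs = zs by apply/eqP; rewrite -subr_eq0 czs.
  split; first by move=> i; rewrite -Hw subrr.
  have Hn : \forall x \near xs, forall i, `|c x i 0 - c xs i 0| < eps.
    have Hi : forall i, \forall x \near xs, `|c x i 0 - c xs i 0| < eps.
      move=> i; have := (hc i).1 xs; move/cvgr_distC_lt => /(_ eps e0).
      by [].
    exact: (@filter_forall _ 'I_m (fun i x => `|c x i 0 - c xs i 0| < eps) (nbhs xs) _ Hi).
  move: Hn => /nbhs_normP.
  case => d d0 Hd.
  exists (Num.min eps d); split; first by rewrite lt_min e0.
  move=> x hx hfeas.
  have [hxe hxd] : `|x - xs| < eps /\ `|x - xs| < d.
    by move: hx; rewrite lt_min => /andP.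
  have hwx : forall i, w (ccomp c i x) (s i 0) mu rho = ccomp c i x.
    by move=> i; apply/esym/eqP; rewrite -subr_eq0; apply/eqP; exact: hfeas.
  have Hx := Hd x (ltac:(by rewrite /ball_ /= distrC)).
  have hle := Hloc x (c x) hxe _ _.
  have e1 : MB_obj f c mu rho s xs = LB_obj f mu xs zs.
    rewrite /MB_obj /LB_obj; congr (_ - _ * _); apply: eq_bigr => i _.
    by rewrite -Hw /ccomp czs'.
  have e2 : MB_obj f c mu rho s x = LB_obj f mu x (c x).
    rewrite /MB_obj /LB_obj; congr (_ - _ * _); apply: eq_bigr => i _.
    by rewrite hwx.
  rewrite e1 e2; apply: hle.
    rewrite -czs'; apply: mxnorm_lt => // i j.
    rewrite (ord1 j) !mxE; exact: Hx.
  split; last by rewrite subrr.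
  move=> i; rewrite -[c x i 0]/(ccomp c i x) -hwx; exact: wpos.
move=> xs zs ss [czs [zpos [hgrad hss]]].
have hz : forall i, ccomp c i xs = zs i 0 by move=> i; rewrite /ccomp czs.
have hzp : forall i, 0 < ccomp c i xs by move=> i; rewrite hz.
have hs : forall i, ss i 0 = mu / ccomp c i xs by move=> i; rewrite hz hss.
split; first by move=> i; rewrite hs wfix.
apply/matrixP => j k; rewrite !mxE /partial.
pose gi := fun (i : 'I_m) (a : R) => mu * ln (w a (ss i 0) mu rho) + ss i 0 * (a - w a (ss i 0) mu rho).
have dgi : forall i, derivable (gi i) (ccomp c i xs) 1 /\ 'D_1 (gi i) (ccomp c i xs) = ss i 0.
  by move=> i; rewrite /gi hs; exact: dg.
have -> : (fun x => MB_L f c mu rho x ss ss) = f - \sum_(i < m) (gi i \o ccomp c i).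
  apply/funext => x; rewrite /MB_L fct_sumE /= /gi -[RHS]/(f x - _) big_split /= -mulr_sumr.
  by rewrite opprD addrA.
have dfx : derivable f xs (ebasis R j) := hf.2.1 j xs.
have dGi : forall i, derivable (gi i \o ccomp c i) xs (ebasis R j) /\
    'D_(ebasis R j) (gi i \o ccomp c i) xs = ss i 0 * partial j (ccomp c i) xs.
  move=> i; have [d1 d2] := dgi i.
  have [e1 e2] := @chain R _ (ccomp c i) (gi i) xs (ebasis R j) ((hc i).2.1 j xs) d1.
  by split; [exact: e1 | rewrite e2 d2].
have dsum : derivable (\sum_(i < m) (gi i \o ccomp c i)) xs (ebasis R j).
  by apply: derivable_sum => i; exact: (dGi i).1.
rewrite (deriveB dfx dsum) derive_sum; last by move=> i; exact: (dGi i).1.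
under eq_bigr do rewrite (dGi _).2.
have := congr1 (fun M : 'M[R]_(n,1) => M j 0) hgrad; rewrite !mxE.
move=> H; apply: (etrans _ H); congr (_ - _); apply: eq_bigr => i _.
by rewrite /gradc mxE mulrC.
Qed.
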